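(* Let $N$ be a nontrivial normal subgroup of $G_2$. If $\phi(N)\simeq S_8$, then $N=G_2$.
   Context: The $2\times2\times2$ Rubik's cube consists of 8 corner cubelets, each carrying 3 colored stickers. Corner positions are numbered 1 = top-front-left, 2 = top-front-right, 3 = top-back-left, 4 = top-back-right, 5 = bottom-front-left, 6 = bottom-front-right, 7 = bottom-back-left, 8 = bottom-back-right. $G_2$ is the subgroup of the symmetric group on the 24 stickers generated by the six moves $u,d,f,b,l,r$ rotating respectively the top, bottom, front, back, left, right layer of four cubelets by $90^\circ$ clockwise as seen from outside facing that face. $\phi:G_2\to S_8$ records the permutation of corner positions. *)

(* Defs.v *)
From mathcomp Require Import all_boot all_fingroup.
Set Implicit Arguments. Unset Strict Implicit. Unset Printing Implicit Defensive.

(* Corner positions: 'I_8, with i : 'I_8 standing for position i+1 of the paper: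
   1 = top-front-left, 2 = top-front-right, 3 = top-back-left, 4 = top-back-right,
   5 = bottom-front-left, 6 = bottom-front-right, 7 = bottom-back-left,
   8 = bottom-back-right.
   Axes: 'I_3, 0 = x (left/right), 1 = y (front/back), 2 = z (top/bottom).
   A sticker is a pair (corner position, axis): the sticker of the cubelet in
   that corner lying on the face of the cube orthogonal to that axis. *)
Definition sticker : finType := ('I_8 * 'I_3)%type.

(* A quarter turn of a layer: corners of the layer are cycled according to the
   table [tbl] (in 1-based labels; corners off the layer are fixed points of the
   table), and, since the rotation is a quarter turn about an axis k, the two
   axes other than k are exchanged (given by the table [ax] on 0-based axes). *)
Definition move_fun (tbl : seq nat) (ax : seq nat) (s : sticker) : sticker :=
  let c := (nat_of_ord s.1).+1 in
  if nth 0 tbl c.-1 != c then (inord (nth 0 tbl c.-1).-1, inord (nth 0 ax s.2))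
  else s.

(* Corner cycles (clockwise as seen from outside the face):
   u : 1->3->4->2->1   d : 5->6->8->7->5   f : 1->2->6->5->1
   b : 3->7->8->4->3   l : 1->5->7->3->1   r : 2->4->8->6->2 *)
Definition tbl_u := [:: 3; 1; 4; 2; 5; 6; 7; 8].
Definition tbl_d := [:: 1; 2; 3; 4; 6; 8; 5; 7].
Definition tbl_f := [:: 2; 6; 3; 4; 1; 5; 7; 8].
Definition tbl_b := [:: 1; 2; 7; 3; 5; 6; 8; 4].
Definition tbl_l := [:: 5; 2; 1; 4; 7; 6; 3; 8].
Definition tbl_r := [:: 1; 4; 3; 8; 5; 2; 7; 6].
Definition swap_xy := [:: 1; 0; 2].
Definition swap_xz := [:: 2; 1; 0].
Definition swap_yz := [:: 0; 2; 1].

Definition tbl_u' := [:: 2; 4; 1; 3; 5; 6; 7; 8].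
Definition tbl_d' := [:: 1; 2; 3; 4; 7; 5; 8; 6].
Definition tbl_f' := [:: 5; 1; 3; 4; 6; 2; 7; 8].
Definition tbl_b' := [:: 1; 2; 4; 8; 5; 6; 3; 7].
Definition tbl_l' := [:: 3; 2; 7; 4; 1; 6; 5; 8].
Definition tbl_r' := [:: 1; 6; 3; 2; 5; 8; 7; 4].

Lemma u_inj : injective (move_fun tbl_u swap_xy).
Proof.
apply: (can_inj (g := move_fun tbl_u' swap_xy)).
case=> [[c Hc] [a Ha]].
do 8?[case: c Hc => [|c] Hc]; do 3?[case: a Ha => [|a] Ha] => //;
  apply/eqP; rewrite /move_fun /= ?inordK //= xpair_eqE -!val_eqE /= ?inordK //.
Qed.

Lemma d_inj : injective (move_fun tbl_d swap_xy).
Proof.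
apply: (can_inj (g := move_fun tbl_d' swap_xy)).
case=> [[c Hc] [a Ha]].
do 8?[case: c Hc => [|c] Hc]; do 3?[case: a Ha => [|a] Ha] => //;
  apply/eqP; rewrite /move_fun /= ?inordK //= xpair_eqE -!val_eqE /= ?inordK //.
Qed.

Lemma f_inj : injective (move_fun tbl_f swap_xz).
Proof.
apply: (can_inj (g := move_fun tbl_f' swap_xz)).
case=> [[c Hc] [a Ha]].
do 8?[case: c Hc => [|c] Hc]; do 3?[case: a Ha => [|a] Ha] => //;
  apply/eqP; rewrite /move_fun /= ?inordK //= xpair_eqE -!val_eqE /= ?inordK //.
Qed.

Lemma b_inj : injective (move_fun tbl_b swap_xz).
Proof.
apply: (can_inj (g := move_fun tbl_b' swap_xz)).
case=> [[c Hc] [a Ha]].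
do 8?[case: c Hc => [|c] Hc]; do 3?[case: a Ha => [|a] Ha] => //;
  apply/eqP; rewrite /move_fun /= ?inordK //= xpair_eqE -!val_eqE /= ?inordK //.
Qed.

Lemma l_inj : injective (move_fun tbl_l swap_yz).
Proof.
apply: (can_inj (g := move_fun tbl_l' swap_yz)).
case=> [[c Hc] [a Ha]].
do 8?[case: c Hc => [|c] Hc]; do 3?[case: a Ha => [|a] Ha] => //;
  apply/eqP; rewrite /move_fun /= ?inordK //= xpair_eqE -!val_eqE /= ?inordK //.
Qed.

Lemma r_inj : injective (move_fun tbl_r swap_yz).
Proof.
apply: (can_inj (g := move_fun tbl_r' swap_yz)).
case=> [[c Hc] [a Ha]].
do 8?[case: c Hc => [|c] Hc]; do 3?[case: a Ha => [|a] Ha] => //;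
  apply/eqP; rewrite /move_fun /= ?inordK //= xpair_eqE -!val_eqE /= ?inordK //.
Qed.

Definition mu : {perm sticker} := perm u_inj.
Definition md : {perm sticker} := perm d_inj.
Definition mf : {perm sticker} := perm f_inj.
Definition mb : {perm sticker} := perm b_inj.
Definition ml : {perm sticker} := perm l_inj.
Definition mr : {perm sticker} := perm r_inj.

Definition G2 : {group {perm sticker}} :=
  <<[set mu; md; mf; mb; ml; mr]>>%G.

(* For permutations that do not induce a permutation of positions (none of
   them lie in G2) the value is the identity. *)
Definition corner_fun (g : {perm sticker}) : {ffun 'I_8 -> 'I_8} :=
  [ffun c => (g (c, ord0)).1].
Definition phi (g : {perm sticker}) : {perm 'I_8} :=
  insubd (1%g : {perm 'I_8}) (corner_fun g).

(* Main.v *)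
Set Warnings "-notation-overridden,-ambiguous-paths".
Require Import Defs.
From mathcomp Require Import all_boot all_fingroup all_algebra.
From Stdlib Require Import FunctionalExtensionality.
Set Implicit Arguments. Unset Strict Implicit. Unset Printing Implicit Defensive.
Import GRing.Theory.
Local Open Scope ring_scope.

Definition ordc n (k : nat) : 'I_n.+1 := Ordinal (ltn_pmod k (ltn0Sn n)).
Lemma ordcE n (i : 'I_n.+1) : ordc n i = i.
Proof. by apply: val_inj; rewrite /= modn_small. Qed.
Lemma ordc_inord n k : (k < n.+1)%N -> ordc n k = inord k.
Proof. by move=> h; apply: val_inj; rewrite /= modn_small // inordK. Qed.

Definition allI n (P : 'I_n.+1 -> bool) := all (fun k => P (ordc n k)) (iota 0 n.+1).
Lemma allIP n (P : 'I_n.+1 -> bool) : allI P -> forall i, P i.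
Proof.
move/allP=> H i; rewrite -(ordcE i); apply: H; rewrite mem_iota /=; exact: ltn_ord.
Qed.

Definition chi (c : 'I_8) : bool := nth false [:: false; true; true; false; true; false; false; true] c.
Definition fr (c : 'I_8) (i : 'Z_3) : 'I_3 :=
  ordc 2 (nth 0%N (if chi c then [:: 2; 1; 0] else [:: 2; 0; 1])%N i).
Definition frinv (c : 'I_8) (a : 'I_3) : 'Z_3 :=
  ordc 2 (nth 0%N (if chi c then [:: 2; 1; 0] else [:: 1; 2; 0])%N a).

Definition posf (f : sticker -> sticker) (c : 'I_8) : 'I_8 := (f (c, ord0)).1.
Definition kkf (f : sticker -> sticker) (c : 'I_8) : 'Z_3 := frinv (posf f c) (f (c, fr c 0)).2.
Definition legalf (f : sticker -> sticker) : bool :=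
  [forall c, forall i : 'Z_3, f (c, fr c i) == (posf f c, fr (posf f c) (i + kkf f c))]
  && (\sum_(c < 8) kkf f c == 0).

Lemma frK c i : frinv c (fr c i) = i.
Proof.
have H : allI (fun c => allI (fun i : 'Z_3 => frinv c (fr c i) == i)) by vm_compute.
exact/eqP/(allIP (allIP H c)).
Qed.

Lemma frinvK c a : fr c (frinv c a) = a.
Proof.
have H : allI (fun c => allI (fun a : 'I_3 => fr c (frinv c a) == a)) by vm_compute.
exact/eqP/(allIP (allIP H c)).
Qed.

Lemma legalf_comp f :
  allI (fun c => allI (fun i : 'Z_3 => f (c, fr c i) == (posf f c, fr (posf f c) (i + kkf f c)))) ->
  (\sum_(c < 8) kkf f c == 0) -> legalf f.
Proof.
move=> H1 H2; rewrite /legalf H2 andbT; apply/forallP=> c; apply/forallP=> i.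
exact: (allIP (allIP H1 c)).
Qed.

Definition move_fun' (tbl : seq nat) (ax : seq nat) (s : sticker) : sticker :=
  let c := (nat_of_ord s.1).+1 in
  if nth 0 tbl c.-1 != c then (ordc 7 (nth 0 tbl c.-1).-1, ordc 2 (nth 0 ax s.2))
  else s.

Lemma move_funE tbl ax : size tbl = 8%N -> all (fun k => 0 < k <= 8)%N tbl ->
  size ax = 3%N -> all (fun k => k < 3)%N ax -> move_fun tbl ax =1 move_fun' tbl ax.
Proof.
move=> st /allP Ht sa /allP Ha [c a]; rewrite /move_fun /move_fun' /=.
case: ifP => // _; congr pair; apply/esym/ordc_inord.
  have hc : (c < size tbl)%N by rewrite st; exact: ltn_ord.
  have := Ht (nth 0 tbl c) (mem_nth 0 hc).
  by case: (nth 0 tbl c) => //= n /andP[_ h].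
apply: Ha; apply: mem_nth; rewrite sa; exact: ltn_ord.
Qed.

Definition gperm (k : nat) : {perm sticker} :=
  nth mu [:: mu; md; mf; mb; ml; mr] k.
Definition gfun (k : nat) : sticker -> sticker :=
  nth (move_fun' tbl_u swap_xy)
    [:: move_fun' tbl_u swap_xy; move_fun' tbl_d swap_xy; move_fun' tbl_f swap_xz;
        move_fun' tbl_b swap_xz; move_fun' tbl_l swap_yz; move_fun' tbl_r swap_yz] k.

Lemma gpermE k x : gperm k x = gfun k x.
Proof.
by do 6?[case: k => [|k]]; rewrite /gperm /gfun /= /mu /md /mf /mb /ml /mr ?nth_nil permE move_funE.
Qed.

Lemma gperm_G2 k : gperm k \in G2.
Proof.
apply: mem_gen; rewrite /gperm.
by do 6?[case: k => [|k]]; rewrite /= ?nth_nil !inE eqxx ?orbT.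
Qed.

Definition wperm (acc : {perm sticker}) (w : seq nat) := foldl (fun a k => (a * gperm k)%g) acc w.
Definition wfun (w : seq nat) (x : sticker) := foldl (fun y k => gfun k y) x w.

Lemma wpermE w acc x : wperm acc w x = wfun w (acc x).
Proof.
elim: w acc => [|k w IH] acc //=.
by rewrite IH permM gpermE.
Qed.

Lemma wperm_G2 w acc : acc \in G2 -> wperm acc w \in G2.
Proof.
elim: w acc => [|k w IH] acc //= H.
by apply: IH; rewrite groupM // gperm_G2.
Qed.

Definition pos (g : {perm sticker}) (c : 'I_8) : 'I_8 := posf (fun x => g x) c.
Definition kk (g : {perm sticker}) (c : 'I_8) : 'Z_3 := kkf (fun x => g x) c.
Definition legal (g : {perm sticker}) : bool := legalf (fun x => g x).

Lemma legalP g : legal g ->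
  (forall c i, g (c, fr c i) = (pos g c, fr (pos g c) (i + kk g c))) /\ \sum_(c < 8) kk g c = 0.
Proof.
case/andP=> /forallP H1 /eqP H2; split=> // c i.
exact/eqP/(forallP (H1 c) i).
Qed.

Lemma legal_app g c a : legal g -> g (c, a) = (pos g c, fr (pos g c) (frinv c a + kk g c)).
Proof. by move=> Hg; rewrite -{1}(frinvK c a) (legalP Hg).1. Qed.

Lemma pos_mul g h c : legal g -> legal h -> pos (g * h)%g c = pos h (pos g c).
Proof.
move=> Hg Hh; rewrite [LHS]/pos /posf /= permM.
by rewrite (legal_app _ _ Hg) (legal_app _ _ Hh).
Qed.

Lemma kk_mul g h c : legal g -> legal h -> kk (g * h)%g c = kk g c + kk h (pos g c).
Proof.
move=> Hg Hh.
change (frinv (pos (g * h)%g c) ((g * h)%g (c, fr c 0)).2 = kk g c + kk h (pos g c)).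
by rewrite pos_mul // permM (legalP Hg).1 (legalP Hh).1 /= frK add0r.
Qed.

Lemma pos1 c : pos 1%g c = c.
Proof. by rewrite /pos /posf perm1. Qed.

Lemma kk1 c : kk 1%g c = 0.
Proof. by rewrite /kk /kkf /posf !perm1 /= frK. Qed.

Lemma legal1 : legal 1%g.
Proof.
apply/andP; split.
  apply/forallP=> c; apply/forallP=> i; apply/eqP.
  change ((1%g : {perm sticker}) (c, fr c i) = (pos 1%g c, fr (pos 1%g c) (i + kk 1%g c))).
  by rewrite perm1 pos1 kk1 addr0.
apply/eqP; change (\sum_(c < 8) kk 1%g c = 0).
by apply: big1 => c _; rewrite kk1.
Qed.

Lemma pos_inj g : legal g -> injective (pos g).
Proof.
move=> Hg c d e.
have : g (c, fr c 0) = g (d, fr d (kk g c - kk g d)).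
  by rewrite !(legalP Hg).1 -e subrK add0r.
by move/perm_inj => [].
Qed.

Lemma legal_mul g h : legal g -> legal h -> legal (g * h)%g.
Proof.
move=> Hg Hh; apply/andP; split.
  apply/forallP=> c; apply/forallP=> i; apply/eqP.
  change ((g * h)%g (c, fr c i) = (pos (g * h)%g c, fr (pos (g * h)%g c) (i + kk (g * h)%g c))).
  by rewrite permM (legalP Hg).1 (legalP Hh).1 pos_mul // kk_mul // addrA.
apply/eqP; change (\sum_(c < 8) kk (g * h)%g c = 0).
rewrite (eq_bigr _ (fun c _ => kk_mul c Hg Hh)) big_split /= (legalP Hg).2 add0r.
have -> : \sum_(c < 8) kk h (pos g c) = \sum_(c < 8) kk h c.
  by apply/esym; exact: (reindex_inj (pos_inj Hg)).
exact: (legalP Hh).2.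
Qed.

Definition Lset := [set g : {perm sticker} | legal g].
Lemma Lset_group : group_set Lset.
Proof.
apply/group_setP; split; first by rewrite inE legal1.
by move=> x y; rewrite !inE; exact: legal_mul.
Qed.
Canonical LG := Group Lset_group.

Lemma legal_gperm k : legal (gperm k).
Proof.
rewrite /legal.
have -> : (fun x => gperm k x) = gfun k by apply: functional_extensionality => x; rewrite gpermE.
do 6?[case: k => [|k]]; rewrite /gfun /= ?nth_nil; (apply: legalf_comp; first by vm_compute);
  by rewrite !big_ord_recl big_ord0; vm_compute.
Qed.

Lemma G2_legal : G2 \subset LG.
Proof.
rewrite /G2 gen_subG; apply/subsetP=> x.
rewrite !inE => /orP[/orP[/orP[/orP[/orP[/eqP->|/eqP->]|/eqP->]|/eqP->]|/eqP->]|/eqP->].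
- exact: (legal_gperm 0).
- exact: (legal_gperm 1).
- exact: (legal_gperm 2).
- exact: (legal_gperm 3).
- exact: (legal_gperm 4).
- exact: (legal_gperm 5).
Qed.

Lemma phiE g c : legal g -> phi g c = pos g c.
Proof.
move=> Hg.
have inj : injectiveb (corner_fun g).
  by apply/injectiveP => a b; rewrite !ffunE; exact: pos_inj.
have E : pval (phi g) = corner_fun g.
  rewrite /phi. apply: insubdK. exact: inj.
by rewrite -pvalE E ffunE.
Qed.

Lemma legalV x : legal x -> legal x^-1%g.
Proof. move=> Lx; have : (x^-1)%g \in LG by rewrite groupV inE. by rewrite inE. Qed.

Lemma legal_eq g h : legal g -> legal h ->
  (forall c, pos g c = pos h c) -> (forall c, kk g c = kk h c) -> g = h.
Proof.
move=> Hg Hh Hp Hk; apply/permP => -[c a].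
by rewrite (legal_app _ _ Hg) (legal_app _ _ Hh) Hp Hk.
Qed.

Lemma legal_pow x n : legal x -> (forall c, pos x c = c) ->
  [/\ legal (x ^+ n)%g, (forall c, pos (x ^+ n)%g c = c) & forall c, kk (x ^+ n)%g c = kk x c *+ n].
Proof.
move=> Lx Px; elim: n => [|n [L1 P1 K1]].
  by rewrite expg0; split; [exact: legal1 | exact: pos1 | move=> c; rewrite kk1 mulr0n].
rewrite expgS; split; first exact: legal_mul.
  by move=> c; rewrite pos_mul // Px P1.
by move=> c; rewrite kk_mul // Px K1 mulrS.
Qed.

Lemma inv_id h : legal h -> (forall c, pos h c = c) ->
  (forall c, pos h^-1%g c = c) /\ forall c, kk h^-1%g c = - kk h c.
Proof.
move=> Lh Ph; have LV := legalV Lh.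
have P c : pos h^-1%g c = c.
  by rewrite -{2}(pos1 c) -(mulVg h) pos_mul // Ph.
split=> // c; apply/eqP; rewrite -addr_eq0.
by rewrite -(kk1 c) -(mulVg h) kk_mul // P.
Qed.

Lemma conj_id h x : legal h -> legal x -> (forall c, pos h c = c) ->
  (forall c, pos (h ^ x)%g c = c) /\ forall c, kk (h ^ x)%g (pos x c) = kk h c.
Proof.
move=> Lh Lx Ph; have Ly := legalV Lx.
have Py c : pos x^-1%g (pos x c) = c by rewrite -pos_mul // mulgV pos1.
have E : (h ^ x)%g = (x^-1 * (h * x))%g by [].
have Lhx := legal_mul Lh Lx.
rewrite E; split=> [d|c].
  by rewrite pos_mul // pos_mul // Ph -pos_mul // mulVg pos1.
rewrite kk_mul // kk_mul // Py Ph.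
have H0 : kk x c + kk x^-1%g (pos x c) = 0 by rewrite -kk_mul // mulgV kk1.
by rewrite addrC -addrA H0 addr0.
Qed.

Lemma perm2 (a b c d : 'I_8) : a != b -> c != d -> exists q : {perm 'I_8}, q a = c /\ q b = d.
Proof.
move=> ab cd; exists (tperm a c * tperm (tperm a c b) d)%g; split.
  have nb : tperm a c b != c.
    apply/eqP => E; move/eqP: ab; apply; apply: (@perm_inj _ (tperm a c)).
    by rewrite E tpermL.
  have nd : d != c by rewrite eq_sym.
  by rewrite permM tpermL (tpermD nb nd).
by rewrite permM tpermL.
Qed.

Definition w_t : seq nat :=
  [:: 5;5;5;1;1;1;5;1;5;5;5;1;1;1;5;1;0;0;0;1;1;1;5;5;5;1;5;1;1;1;5;5;5;1;5;0]%N.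
Definition t := wperm 1%g w_t.
Definition kt (c : 'I_8) : 'Z_3 := ordc 2 (nth 0 [:: 2;1;0;0;0;0;0;0] c)%N.
Definition mv (c : 'I_8) : 'Z_3 := ordc 2 (nth 0 [:: 1;0;2;0;0;0;0;0] c)%N.
Definition sw (e : 'I_8) : 'I_8 :=
  if e == ordc 7 0 then ordc 7 2 else if e == ordc 7 2 then ordc 7 0 else e.

Lemma t_G2 : t \in G2.
Proof. exact: (wperm_G2 _ (group1 _)). Qed.

Lemma t_pos c : pos t c = c.
Proof.
have H : allI (fun c : 'I_8 => (wfun w_t (c, ord0)).1 == c) by vm_compute.
by rewrite /pos /posf wpermE perm1; exact/eqP/(allIP H).
Qed.

Lemma t_kk c : kk t c = kt c.
Proof.
have H : allI (fun c : 'I_8 => frinv c (wfun w_t (c, fr c 0)).2 == kt c) by vm_compute.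
rewrite /kk /kkf -/(pos t c) t_pos /= wpermE perm1; exact/eqP/(allIP H).
Qed.

Lemma sw_comp e : - kt e + kt (sw e) = mv e.
Proof.
have H : allI (fun e : 'I_8 => - kt e + kt (sw e) == mv e) by vm_compute.
exact/eqP/(allIP H).
Qed.

Lemma tpermE02 e : tperm (ordc 7 0) (ordc 7 2) e = sw e.
Proof.
rewrite /sw; case: tpermP => [->|->|/eqP/negbTE-> /eqP/negbTE->] //.
Qed.

Lemma mv0 : mv (ordc 7 0) = 1.
Proof. by vm_compute. Qed.

Lemma mv_other x : x != ordc 7 0 -> x != ordc 7 2 -> mv x = 0.
Proof.
have H : allI (fun x : 'I_8 => (x == ordc 7 0) || (x == ordc 7 2) || (mv x == 0)) by vm_compute.
move=> h0 h2; have := allIP H x; rewrite (negbTE h0) (negbTE h2) /=; exact/eqP.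
Qed.

Local Close Scope ring_scope.

Theorem proposition2p8 (N : {group {perm sticker}}) :
  (N <| G2)%g -> (N :!=: 1)%g ->
  (phi @: N \isog [set: {perm 'I_8}])%g ->
  (N :=: G2)%g.
Proof.
Local Open Scope ring_scope.
move=> nNG _ iso.
have sNG := normal_sub nNG.
have nN := normal_norm nNG.
have legG x : x \in G2 -> legal x.
  by move=> Gx; have := subsetP G2_legal x Gx; rewrite inE.
have legN x : x \in N -> legal x by move=> Nx; apply: legG; exact: (subsetP sNG).
have surj : forall p, exists2 n, n \in N & phi n = p.
  have phi1 : phi 1%g = 1%g by apply/permP => c; rewrite phiE ?legal1 // pos1 perm1.
  have A1 : (1%g : {perm 'I_8}) \in phi @: N by rewrite -phi1 imset_f // group1.
  case/existsP: iso => f /andP[_ /eqP Hf].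
  have Hc : (#|[set: {perm 'I_8}]| <= #|phi @: N|)%N.
    rewrite (cardsD1 1%g [set: _]) (cardsD1 1%g (phi @: N)) A1 inE /= !add1n ltnS.
    rewrite -Hf; exact: leq_imset_card.
  have E : phi @: N = [set: _] by apply/eqP; rewrite eqEcard subsetT Hc.
  move=> p; have : p \in phi @: N by rewrite E inE.
  by case/imsetP => n Nn ->; exists n.
have Lt := legG t t_G2.
case: (surj (tperm (ordc 7 0) (ordc 7 2))) => n0 Nn0 phin0.
have Ln0 := legN n0 Nn0.
pose m := (t^-1 * t ^ n0)%g.
have Nm : m \in N.
  have -> : m = ((n0^-1) ^ t * n0)%g by rewrite /m /conjg !mulgA.
  rewrite groupM // memJ_norm ?groupV //; exact: (subsetP nN _ t_G2).
have Lm := legN m Nm.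
have [pti kti] := inv_id Lt t_pos.
have [ptn ktn] := conj_id Lt Ln0 t_pos.
have LtV := legalV Lt.
have LtJ : legal (t ^ n0)%g by apply: legG; rewrite groupJ // ?t_G2 // (subsetP sNG).
have posm c : pos m c = c by rewrite pos_mul // pti ptn.
have kkm e : kk m e = mv e.
  have pn c : pos n0 c = tperm (ordc 7 0) (ordc 7 2) c by rewrite -phiE // phin0.
  rewrite kk_mul // pti kti t_kk -{2}(tpermK (ordc 7 0) (ordc 7 2) e) -pn ktn t_kk.
  by rewrite tpermE02 sw_comp.
have Ej : forall j : 'I_8, j != ord_max -> exists E, [/\ E \in N, legal E,
    (forall c, pos E c = c), kk E j = 1 & forall d, d != j -> d != ord_max -> kk E d = 0].
  move=> j Hj.
  have [q [q0 q2]] := perm2 (isT : ordc 7 0 != ordc 7 2) Hj.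
  case: (surj q) => n Nn phin.
  have Ln := legN n Nn.
  have pn c : pos n c = q c by rewrite -phiE // phin.
  have [pE kE] := conj_id Lm Ln posm.
  have kEd d : kk (m ^ n)%g d = mv (q^-1%g d) by rewrite -{1}(permKV q d) -pn kE kkm.
  exists (m ^ n)%g; split => //.
  - by rewrite groupJ.
  - by apply: legN; rewrite groupJ.
  - by rewrite kEd -q0 permK mv0.
  move=> d dj dm; rewrite kEd; apply: mv_other.
    by rewrite -(inj_eq (@perm_inj _ q)) permKV q0.
  by rewrite -(inj_eq (@perm_inj _ q)) permKV q2.
have Q : forall j, (j <= 7)%N -> forall v : 'I_8 -> 'Z_3, exists x, [/\ x \in N, legal x,
    (forall c, pos x c = c) & forall d : 'I_8, (d < j)%N -> kk x d = v d].
  elim => [|j IH] Hj v.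
    exists 1%g; split; [exact: group1 | exact: legal1 | exact: pos1 | by []].
  have [x [Nx Lx px kx]] := IH (ltnW Hj) v.
  have Hj8 : (j < 8)%N by apply: leq_trans Hj _.
  pose jj : 'I_8 := Ordinal Hj8.
  have jjm : jj != ord_max by rewrite -val_eqE /= neq_ltn Hj.
  have [E [NE LE pE kEj kE0]] := Ej jj jjm.
  pose w := nat_of_ord (v jj - kk x jj).
  have [Lw pw kw] := legal_pow w LE pE.
  exists (x * E ^+ w)%g; split.
  - by rewrite groupM // groupX.
  - exact: legal_mul.
  - by move=> c; rewrite pos_mul // px pw.
  move=> d; rewrite ltnS leq_eqVlt => /orP[/eqP dj | dlt].
    have -> : d = jj by apply: val_inj.
    rewrite kk_mul // px kw kEj.
    by rewrite -/w (_ : 1 *+ w = w%:R) // natr_Zp addrC subrK.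
  rewrite kk_mul // px kw kE0 ?mul0rn ?addr0 ?kx //.
    by rewrite -val_eqE /= neq_ltn dlt.
  by rewrite -val_eqE /= neq_ltn (ltn_trans dlt (leq_trans Hj _)).
apply/eqP; rewrite eqEsubset sNG /=; apply/subsetP => g Gg.
have Lg := legG g Gg.
case: (surj (phi g)) => n Nn phin.
have Ln := legN n Nn.
have LnV := legalV Ln.
have Gh : (g * n^-1)%g \in G2 by rewrite groupM // groupV (subsetP sNG).
have Lh := legG _ Gh.
have ph c : pos (g * n^-1)%g c = c.
  by rewrite pos_mul // -(phiE c Lg) -phin (phiE c Ln) -pos_mul // mulgV pos1.
have [x [Nx Lx px kx]] := Q 7%N (leqnn 7) (kk (g * n^-1)%g).
have kx' d : kk x d = kk (g * n^-1)%g d.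
  case: (ltnP d 7) => [/kx //|d7].
  have -> : d = ord_max by apply: val_inj => /=; apply/eqP; rewrite eqn_leq d7 -ltnS ltn_ord.
  have Sx := (legalP Lx).2; have Sh := (legalP Lh).2.
  rewrite (bigD1 ord_max) //= in Sx; rewrite (bigD1 ord_max) //= in Sh.
  have Er : \sum_(c < 8 | c != ord_max) kk x c = \sum_(c < 8 | c != ord_max) kk (g * n^-1)%g c.
    apply: eq_bigr => c Hc; apply: kx.
    by move: Hc (ltn_ord c); rewrite -val_eqE /= ltnS leq_eqVlt => /negbTE ->.
  rewrite Er in Sx; apply: (addIr (\sum_(c < 8 | c != ord_max) kk (g * n^-1)%g c)).
  by rewrite Sx Sh.
have Ex : x = (g * n^-1)%g by apply: legal_eq => // c; rewrite px ph.
have -> : g = (x * n)%g by rewrite Ex -mulgA mulVg mulg1.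
by rewrite groupM.
Qed.
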